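(* Let $A$ be a commutative ring and $\sigma$ a hereditary torsion theory on $A$-modules. (i) If $L\subseteq M$ is a totally $\sigma$-torsion submodule of an $A$-module $M$, then $M$ is totally $\sigma$-simple if and only if $M/L$ is totally $\sigma$-simple. (ii) If $M\subseteq M'$ are $A$-modules and there exists $\mathfrak{h}_0\in\mathcal{L}(\sigma)$ with $M'\mathfrak{h}_0\subseteq M$, then $M$ is totally $\sigma$-simple if and only if $M'$ is totally $\sigma$-simple.
   Context: $\mathcal{L}(\sigma)$ is the Gabriel filter of $\sigma$. A module $X$ is totally $\sigma$-torsion if $X\mathfrak{k}=0$ for some $\mathfrak{k}\in\mathcal{L}(\sigma)$. An $A$-module $M$ is totally $\sigma$-simple if $M$ is not totally $\sigma$-torsion and there exists $\mathfrak{h}\in\mathcal{L}(\sigma)$ such that $M\mathfrak{h}\subseteq H$ for every submodule $H\subseteq M$ that is not totally $\sigma$-torsion. *)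

(* Defs.v *)
From HB Require Import structures.
From mathcomp Require Import all_boot all_order all_algebra.
Set Implicit Arguments. Unset Strict Implicit. Unset Printing Implicit Defensive.
Import GRing.Theory.
Local Open Scope ring_scope.

Definition is_ideal (A : comPzRingType) (I : {pred A}) : Prop :=
  [/\ 0 \in I,
      (forall x y, x \in I -> y \in I -> x + y \in I) &
      (forall a x, x \in I -> a * x \in I)].

Definition colon (A : comPzRingType) (I : {pred A}) (a : A) : {pred A} :=
  fun b => b * a \in I.

(* A Gabriel filter (= the Gabriel filter L(sigma) of a hereditary torsion
   theory sigma on A-modules), given as a family of ideals of A. *)
Definition gabriel_filter (A : comPzRingType) (F : {pred A} -> Prop) : Prop :=
  [/\ (forall I, F I -> is_ideal I),
      F (fun _ => true),
      (forall I J, F I -> is_ideal J -> {subset I <= J} -> F J),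
      (forall I a, F I -> F (colon I a)) &
      (forall I J, is_ideal I -> F J ->
          (forall a, a \in J -> F (colon I a)) -> F I)].

Definition is_submod (A : comPzRingType) (V : lmodType A) (S : {pred V}) : Prop :=
  [/\ 0 \in S,
      (forall x y, x \in S -> y \in S -> x + y \in S) &
      (forall (a : A) x, x \in S -> a *: x \in S)].

(* The product X k of a submodule X and an ideal k: the set of finite sums
   of elements a *: x with a \in k and x \in X (commutative ring, so
   left/right does not matter). *)
Definition prodmod (A : comPzRingType) (V : lmodType A) (X : {pred V})
    (k : {pred A}) (v : V) : Prop :=
  exists n (a : 'I_n -> A) (x : 'I_n -> V),
    [/\ (forall i, a i \in k), (forall i, x i \in X) &
        v = \sum_(i < n) a i *: x i].

Definition totally_torsion (A : comPzRingType) (F : {pred A} -> Prop)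
    (V : lmodType A) (X : {pred V}) : Prop :=
  exists k, F k /\ (forall v, prodmod X k v -> v = 0).

(* The submodule S of V (viewed as a module) is totally sigma-simple;
   submodules of S are the submodules of V contained in S. *)
Definition totally_simple (A : comPzRingType) (F : {pred A} -> Prop)
    (V : lmodType A) (S : {pred V}) : Prop :=
  ~ totally_torsion F S /\
  exists h, F h /\
    forall H : {pred V}, is_submod H -> {subset H <= S} ->
      ~ totally_torsion F H -> (forall v, prodmod S h v -> v \in H).

(* Main.v *)
Require Import Defs.
From HB Require Import structures.
From mathcomp Require Import all_boot all_order all_algebra.
From Stdlib Require Import ClassicalEpsilon.
Import GRing.Theory.
Local Open Scope ring_scope.

Definition cb (P : Prop) : bool := if excluded_middle_informative P then true else false.
Lemma cbP (P : Prop) : cb P <-> P.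
Proof. by rewrite /cb; case: excluded_middle_informative. Qed.

Lemma inP (T : Type) (P : {pred T}) x : (x \in P) = P x.
Proof. by []. Qed.

Section S.
Variables (A : comPzRingType) (F : {pred A} -> Prop).
Hypothesis hF : gabriel_filter F.

Lemma keyG (V : lmodType A) (X Y Q : V -> Prop) h0 h :
  F h0 -> F h -> (forall a x, a \in h0 -> X x -> Y (a*:x)) ->
  (forall b y, b \in h -> Y y -> Q (b*:y)) ->
  Q 0 -> (forall y z, Q y -> Q z -> Q (y+z)) -> (forall a y, Q y -> Q (a*:y)) ->
  F (fun c => cb (forall x, X x -> Q (c*:x))).
Proof.
move=> Fh0 Fh hXY hYQ Q0 QD QZ.
case: hF => _ _ hup _ hgab.
have colid : forall a, is_ideal (colon (fun c => cb (forall x, X x -> Q (c*:x))) a).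
  move=> a; split.
  - rewrite inP /colon inP; apply/cbP => x _; rewrite mul0r scale0r; exact: Q0.
  - move=> y z; rewrite !inP /colon !inP => /cbP Hy /cbP Hz; apply/cbP => x Xx.
    rewrite mulrDl scalerDl; exact: QD (Hy x Xx) (Hz x Xx).
  - move=> b y; rewrite !inP /colon !inP => /cbP Hy; apply/cbP => x Xx.
    rewrite -mulrA -scalerA; exact: QZ (Hy x Xx).
apply: (hgab _ h0) => //.
  split.
  - rewrite inP; apply/cbP => x _; rewrite scale0r; exact: Q0.
  - move=> y z; rewrite !inP => /cbP Hy /cbP Hz; apply/cbP => x Xx.
    rewrite scalerDl; exact: QD (Hy x Xx) (Hz x Xx).
  - move=> b y; rewrite !inP => /cbP Hy; apply/cbP => x Xx.
    rewrite -scalerA; exact: QZ (Hy x Xx).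
move=> a ha; apply: (hup h) => // b hb.
rewrite /colon inP; apply/cbP => x Xx; rewrite -scalerA; exact: hYQ (hXY _ _ ha Xx).
Qed.

Lemma PM1 (V : lmodType A) (X : {pred V}) k (Q : V -> Prop) v :
  Q 0 -> (forall y z, Q y -> Q z -> Q (y+z)) ->
  (forall a x, a \in k -> x \in X -> Q (a*:x)) -> prodmod X k v -> Q v.
Proof.
move=> Q0 QD H [n [a [x [ha hx ->]]]].
by elim/big_ind: _ => // i _; apply: H.
Qed.

Lemma PM2 (V : lmodType A) (X : {pred V}) k a x :
  a \in k -> x \in X -> prodmod X k (a*:x).
Proof.
move=> ha hx; exists 1%N, (fun _ => a), (fun _ => x); split => //.
by rewrite big_ord1.
Qed.
Definition ttA {V : lmodType A} (X : {pred V}) :=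
  exists k, F k /\ (forall a x, a \in k -> x \in X -> a *: x = 0).

Lemma tt_iff (V : lmodType A) (X : {pred V}) : totally_torsion F X <-> ttA X.
Proof.
split=> [[k [Fk H]]|[k [Fk H]]]; exists k; split=> //.
  move=> a x ha hx; apply: (H (a *: x)); exact: PM2.
move=> v; apply: (@PM1 V X k (fun v => v = 0) v) => //; first by move=> y z -> ->; rewrite addr0.
Qed.

Lemma ts_iff (V : lmodType A) (S : {pred V}) : totally_simple F S <->
  ~ ttA S /\ exists h, F h /\ forall H : {pred V}, is_submod H -> {subset H <= S} ->
      ~ ttA H -> forall a x, a \in h -> x \in S -> a *: x \in H.
Proof.
split=> [[nt [h [Fh Hh]]]|[nt [h [Fh Hh]]]].
  split; first by rewrite -tt_iff.
  exists h; split=> // H sH sub nH a x ha hx; apply: (Hh H) => //.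
    by rewrite tt_iff.
  exact: PM2.
split; first by rewrite tt_iff.
exists h; split=> // H sH sub nH v; case: (sH) => H0 HD _.
apply: (@PM1 V S h (fun v => v \in H) v) => //; apply: Hh => //; by rewrite -tt_iff.
Qed.

Lemma partI (M N : lmodType A) (L : {pred M}) (f : {linear M -> N}) :
  is_submod L -> totally_torsion F L ->
  (forall x, f x = 0 <-> x \in L) -> (forall y, exists x, f x = y) ->
  (totally_simple F (fun _ : M => true) <-> totally_simple F (fun _ : N => true)).
Proof.
move=> sL /tt_iff [k0 [Fk0 hk0]] hker hsurj.
have ttMN : ttA (fun _ : M => true) <-> ttA (fun _ : N => true).
  split=> [[k [Fk H]]|[k [Fk H]]].
    exists k; split=> // a y ha _; have [x <-] := hsurj y.
    have -> : a *: f x = f (a *: x) by rewrite linearZ.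
    by rewrite H // linear0.
  pose Q := fun v : M => v = 0.
  have FJ := @keyG M (fun _ => True) (fun x => x \in L) Q k k0 Fk Fk0.

  exists (fun c => cb (forall x, True -> Q (c*:x))); split.
    apply: FJ.
    - move=> a x ha _; apply/hker.
      have -> : f (a*:x) = a *: f x by rewrite linearZ.
      exact: H.
    - by move=> b y hb hy; rewrite /Q; apply: hk0.
    - by [].
    - by move=> y z; rewrite /Q => -> ->; rewrite addr0.
    - by move=> a y; rewrite /Q => ->; rewrite scaler0.
  by move=> a x /cbP ha _; apply: ha.
rewrite !ts_iff; split.
  move=> [nM [h [Fh Hh]]]; split; first by rewrite -ttMN.
  exists h; split=> // H sH _ nH a y ha _.
  pose P : {pred M} := fun x => f x \in H.
  have sP : is_submod P.
    case: (sH) => H0 HD HZ; split.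
    - by rewrite inP /P linear0.
    - move=> u w; rewrite !inP /P => hu hw; rewrite linearD; exact: HD.
    - move=> b u; rewrite !inP /P => hu; rewrite linearZ; exact: HZ.
  have nP : ~ ttA P.
    move=> [k [Fk Hk]]; apply: nH; exists k; split=> // b z hb hz.
    have [x hx] := hsurj z; subst z.
    have -> : b *: f x = f (b*:x) by rewrite linearZ.
    by rewrite Hk // linear0.
  have [x <-] := hsurj y.
  have := Hh P sP (fun _ _ => isT) nP a x ha isT.
  by rewrite inP /P linearZ.
move=> [nN [h [Fh Hh]]]; split; first by rewrite ttMN.
pose Q := fun z : M => forall H : {pred M}, is_submod H -> ~ ttA H -> z \in H.
pose Y := fun z : M => forall H : {pred M}, is_submod H -> ~ ttA H ->
   exists x'' l, [/\ x'' \in H, l \in L & z = x'' + l].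
have FJ := @keyG M (fun _ => True) Y Q h k0 Fh Fk0.
exists (fun c => cb (forall x, True -> Q (c*:x))); split.
  apply: FJ.
  - move=> a x ha _ H sH nH.
    pose I : {pred N} := fun y => cb (exists x'', x'' \in H /\ f x'' = y).
    case: (sH) => H0 HD HZ.
    have sI : is_submod I.
      split.
      + rewrite inP /I; apply/cbP; exists 0; split=> //; exact: linear0.
      + move=> y z; rewrite !inP /I => /cbP [u [hu <-]] /cbP [w [hw <-]].
        apply/cbP; exists (u+w); split; [exact: HD | exact: linearD].
      + move=> b y; rewrite !inP /I => /cbP [u [hu <-]].
        apply/cbP; exists (b*:u); split; [exact: HZ | exact: linearZ].
    have nI : ~ ttA I.
      move=> [k [Fk Hk]]; apply: nH.
      have FJ2 := @keyG M (fun x => x \in H) (fun x => x \in L) (fun v => v = 0) k k0 Fk Fk0.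
      exists (fun c => cb (forall x, x \in H -> c*:x = 0)); split.
        apply: FJ2.
        - move=> b z hb hz; apply/hker.
          have -> : f (b*:z) = b *: f z by rewrite linearZ.
          apply: Hk => //; rewrite inP /I; apply/cbP; by exists z.
        - move=> b z hb hz; exact: hk0.
        - by [].
        - by move=> y z -> ->; rewrite addr0.
        - by move=> b z ->; rewrite scaler0.
      by move=> b z /cbP hb hz; apply: hb.
    have := Hh I sI (fun _ _ => isT) nI a (f x) ha isT.
    rewrite inP /I => /cbP [u [hu fu]].
    exists u, (a*:x - u); split => //; last by rewrite addrC subrK.
    by apply/hker; rewrite linearB linearZ fu subrr.
  - move=> b y hb hy H sH nH; have [u [l [hu hl ->]]] := hy H sH nH.
    case: (sH) => _ HD HZ; rewrite scalerDr (hk0 b l hb hl) addr0; exact: HZ.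
  - by move=> H [H0 _ _].
  - move=> y z hy hz H sH nH; case: (sH) => _ HD _; exact: HD (hy H sH nH) (hz H sH nH).
  - move=> a y hy H sH nH; case: (sH) => _ _ HZ; exact: HZ (hy H sH nH).
move=> H sH _ nH a x /cbP ha _; exact: ha x I H sH nH.
Qed.
Lemma partII (V : lmodType A) (M M' : {pred V}) :
  is_submod M -> is_submod M' -> {subset M <= M'} ->
  (exists h0, F h0 /\ (forall v, prodmod M' h0 v -> v \in M)) ->
  (totally_simple F M <-> totally_simple F M').
Proof.
move=> sM sM' sub [h0 [Fh0 Hh0']].
have Hh0 : forall a x, a \in h0 -> x \in M' -> a *: x \in M.
  move=> a x ha hx; apply: Hh0'; exact: PM2.
have ttUp : forall X Y : {pred V}, (forall a x, a \in h0 -> x \in X -> a*:x \in Y) ->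
    ttA Y -> ttA X.
  move=> X Y hXY [k [Fk Hk]].
  exists (fun c => cb (forall x, x \in X -> c*:x = 0)); split.
    apply: (@keyG V (fun x => x \in X) (fun x => x \in Y) (fun v => v = 0) h0 k).
    - exact: Fh0.
    - exact: Fk.
    - exact: hXY.
    - exact: Hk.
    - by [].
    - by move=> y z -> ->; rewrite addr0.
    - by move=> b z ->; rewrite scaler0.
  by move=> b z /cbP hb hz; exact: hb z hz.
have ttMM' : ttA M <-> ttA M'.
  split; first exact: ttUp.
  move=> [k [Fk Hk]]; exists k; split=> // a x ha hx; apply: Hk => //; exact: sub.
rewrite !ts_iff; split.
  move=> [nM [h [Fh Hh]]]; split; first by rewrite -ttMM'.
  pose Q := fun z : V => forall H : {pred V}, is_submod H -> {subset H <= M'} ->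
     ~ ttA H -> z \in H.
  have FJ := @keyG V (fun x => x \in M') (fun x => x \in M) Q h0 h Fh0 Fh.
  exists (fun c => cb (forall x, x \in M' -> Q (c*:x))); split.
    apply: FJ.
    - exact: Hh0.
    - move=> b y hb hy H sH subH nH.
      pose HM : {pred V} := fun z => (z \in H) && (z \in M).
      have sHM : is_submod HM.
        case: (sH) => H0 HD HZ; case: (sM) => M0 MD MZ; split.
        + by rewrite inP /HM H0 M0.
        + move=> u w; rewrite !inP /HM => /andP [hu mu] /andP [hw mw].
          by rewrite HD ?MD.
        + move=> c u; rewrite !inP /HM => /andP [hu mu]; by rewrite HZ ?MZ.
      have nHM : ~ ttA HM.
        move=> t; apply: nH; apply: (ttUp H HM) => // c u hc hu.
        rewrite inP /HM; apply/andP; split.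
        + by case: sH => _ _ HZ; exact: HZ.
        + by apply: Hh0 => //; exact: subH.
      have subHM : {subset HM <= M} by move=> u; rewrite inP /HM => /andP [].
      have := Hh HM sHM subHM nHM b y hb hy.
      by rewrite inP /HM => /andP [].
    - by move=> H [H0 _ _].
    - move=> y z hy hz H sH s nH; case: (sH) => _ HD _.
      exact: HD (hy H sH s nH) (hz H sH s nH).
    - move=> a y hy H sH s nH; case: (sH) => _ _ HZ; exact: HZ (hy H sH s nH).
  move=> H sH subH nH a x /cbP ha hx; exact: ha x hx H sH subH nH.
move=> [nM' [h [Fh Hh]]]; split; first by rewrite ttMM'.
exists h; split=> // H sH subH nH a x ha hx; apply: Hh => //.
  move=> u hu; exact: sub (subH u hu).
exact: sub.
Qed.
End S.

Theorem mainTheorem20 (A : comPzRingType) (F : {pred A} -> Prop) :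
  gabriel_filter F ->
  (* (i): M/L is represented by any N with a surjective linear map M -> N
     whose kernel is exactly L. *)
  (forall (M N : lmodType A) (L : {pred M}) (f : {linear M -> N}),
      is_submod L -> totally_torsion F L ->
      (forall x, f x = 0 <-> x \in L) -> (forall y, exists x, f x = y) ->
      (totally_simple F (fun _ : M => true) <->
       totally_simple F (fun _ : N => true))) /\
  (* (ii) *)
  (forall (V : lmodType A) (M M' : {pred V}),
      is_submod M -> is_submod M' -> {subset M <= M'} ->
      (exists h0, F h0 /\ (forall v, prodmod M' h0 v -> v \in M)) ->
      (totally_simple F M <-> totally_simple F M')).
Proof.
move=> hF; split.
  move=> M N L f; exact: partI.
move=> V M M'; exact: partII.
Qed.
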